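(* Let $\mathcal{P}$ be a profile of unrooted phylogenetic trees whose display graph $G(\mathcal{P})$ is connected. Then $G(\mathcal{P})$ has a complete set of pairwise parallel nice minimal cuts if and only if it has a complete set of pairwise parallel legal minimal cuts.
   Context: A phylogenetic tree is an unrooted tree whose leaves are bijectively labeled (leaves identified with labels; internal vertices have degree at least three). A profile $\mathcal{P}=\{T_1,\dots,T_k\}$ is a finite collection of phylogenetic trees; internal vertices of distinct trees are disjoint, while leaves with the same label are the same vertex. The display graph $G(\mathcal{P})$ has vertex set $\bigcup_i V(T_i)$ and edge set $\bigcup_i E(T_i)$. An edge of an input tree is internal if both endpoints are internal (non-leaf) vertices. For a vertex $u$ of an input tree, $\mathrm{Inc}(u)$ is the set of edges of $G(\mathcal{P})$ incident with $u$. A cut of a connected graph $G$ is $F\subseteq E(G)$ with $G-F$ (same vertices, edges of $F$ removed) disconnected; minimal if no proper subset is a cut. Minimal cuts $F,F'$ are parallel if $G-F$ has at most one connected component $H$ with $E(H)\cap F'\neq\emptyset$. A cut $F$ of $G(\mathcal{P})$ is legal if for every $T\in\mathcal{P}$ there is $u\in V(T)$ with $F\cap E(T)\subseteq\mathrm{Inc}(u)$; nice if legal and every component of $G(\mathcal{P})-F$ contains at least one edge. A set $\mathcal{F}$ of cuts of $G(\mathcal{P})$ is complete if for every $T\in\mathcal{P}$ and every internal edge $e$ of $T$ there is $F\in\mathcal{F}$ with $F\cap E(T)=\{e\}$. *)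

(* Defs.v *)
From mathcomp Require Import all_boot.
Set Implicit Arguments. Unset Strict Implicit. Unset Printing Implicit Defensive.

Section Graphs.
Variable V : finType.

(* Edges are 2-element vertex sets; a graph on all of V is given by its edge set. *)
Definition adjE (E : {set {set V}}) : rel V := fun x y => [set x; y] \in E.

Definition gconnected (E : {set {set V}}) : Prop :=
  forall x y : V, connect (adjE E) x y.

Definition comp (E : {set {set V}}) (x : V) : {set V} :=
  [set y | connect (adjE E) x y].

Definition components (E : {set {set V}}) : {set {set V}} :=
  [set comp E x | x : V].

Definition comp_edges (E : {set {set V}}) (H : {set V}) : {set {set V}} :=
  [set e in E | e \subset H].

(* A profile is k trees; tree i has vertex set VT i and edge set ET i,
   all living in the common vertex type V (shared vertices = leaves with
   the same label). *)
Variables (k : nat) (VT : 'I_k -> {set V}) (ET : 'I_k -> {set {set V}}).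

Definition deg (i : 'I_k) (v : V) : nat := #|[set e in ET i | v \in e]|.

Definition is_leaf (i : 'I_k) (v : V) : bool := (v \in VT i) && (deg i v <= 1).
Definition is_internal (i : 'I_k) (v : V) : bool := (v \in VT i) && ~~ is_leaf i v.

Definition is_tree (i : 'I_k) : Prop :=
  [/\ VT i != set0,
      (forall e, e \in ET i -> #|e| = 2 /\ e \subset VT i),
      (forall x y, x \in VT i -> y \in VT i -> connect (adjE (ET i)) x y) &
      (* acyclic: no edge lies on a cycle *)
      (forall e x y, e \in ET i -> e = [set x; y] ->
          ~~ connect (adjE (ET i :\ e)) x y)].

Definition is_phylo_tree (i : 'I_k) : Prop :=
  is_tree i /\ (forall v, is_internal i v -> 3 <= deg i v).

Definition is_profile : Prop :=
  [/\ (forall i, is_phylo_tree i),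
      (forall i j v, i != j -> v \in VT i -> v \in VT j -> is_leaf i v /\ is_leaf j v) &
      (* vertex set of the display graph is the union of the trees' vertex sets *)
      (forall v, exists i, v \in VT i)].

Definition EG : {set {set V}} := \bigcup_(i < k) ET i.

Definition Inc (u : V) : {set {set V}} := [set e in EG | u \in e].

Definition is_cut (F : {set {set V}}) : Prop :=
  F \subset EG /\ ~ gconnected (EG :\: F).

Definition minimal_cut (F : {set {set V}}) : Prop :=
  is_cut F /\ (forall F' : {set {set V}}, F' \proper F -> ~ is_cut F').

Definition parallel (F F' : {set {set V}}) : Prop :=
  forall H1 H2, H1 \in components (EG :\: F) -> H2 \in components (EG :\: F) ->
    comp_edges (EG :\: F) H1 :&: F' != set0 ->
    comp_edges (EG :\: F) H2 :&: F' != set0 -> H1 = H2.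

Definition legal (F : {set {set V}}) : Prop :=
  forall i : 'I_k, exists2 u, u \in VT i & F :&: ET i \subset Inc u.

Definition nice (F : {set {set V}}) : Prop :=
  legal F /\ (forall H, H \in components (EG :\: F) ->
                 comp_edges (EG :\: F) H != set0).

Definition internal_edge (i : 'I_k) (e : {set V}) : Prop :=
  e \in ET i /\ (forall v, v \in e -> is_internal i v).

Definition complete (Fs : {set {set {set V}}}) : Prop :=
  (forall F, F \in Fs -> is_cut F) /\
  (forall i e, internal_edge i e -> exists2 F, F \in Fs & F :&: ET i = [set e]).

Definition pairwise_parallel (Fs : {set {set {set V}}}) : Prop :=
  forall F F', F \in Fs -> F' \in Fs -> F != F' -> parallel F F'.

End Graphs.

(* Main.v *)
Require Import Defs.
From mathcomp Require Import all_boot.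

Lemma edge2 (V : finType) (k : nat) (VT : 'I_k -> {set V})
    (ET : 'I_k -> {set {set V}}) f :
  is_profile VT ET -> f \in EG ET -> #|f| = 2.
Proof.
case=> Hph _ _ /bigcupP [i _ fi].
by case: (Hph i) => [[_ H _ _] _]; case: (H f fi).
Qed.

Lemma key (V : finType) (k : nat) (VT : 'I_k -> {set V})
    (ET : 'I_k -> {set {set V}}) F i e (x : V) :
  is_profile VT ET -> minimal_cut ET F -> internal_edge VT ET i e ->
  F :&: ET i = [set e] ->
  comp_edges (EG ET :\: F) (Defs.comp (EG ET :\: F) x) = set0 -> False.
Proof.
move=> Hp [Fcut Fmin] [ei eint] FE Hemp.
have IncF : Inc ET x \subset F.
  apply/subsetP => f; rewrite inE => /andP [fG xf]; apply/negPn/negP => fF.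
  have /eqP/cards2P [a [b [ab fab]]] := @edge2 _ _ VT ET f Hp fG.
  have [y fy] : exists y, f = [set x; y].
    move: xf; rewrite fab !inE => /orP [] /eqP ->; first by exists b.
    by exists a; rewrite setUC.
  have fE : f \in EG ET :\: F by rewrite inE fF fG.
  have yc : y \in Defs.comp (EG ET :\: F) x.
    by rewrite inE; apply: connect1; rewrite /adjE -fy.
  have : f \in comp_edges (EG ET :\: F) (Defs.comp (EG ET :\: F) x).
    rewrite inE fE /=; apply/subsetP => z; rewrite fy !inE => /orP [] /eqP ->//.
    by move: yc; rewrite inE.
  move=> Hf; have : f \in (set0 : {set {set V}}) by rewrite -Hemp.
  by rewrite inE.
have IncC : is_cut ET (Inc ET x).
  split; first by apply/subsetP => f; rewrite inE => /andP [].
  move=> Hcon.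
  have e2 : #|e| = 2 by apply: (@edge2 _ _ VT ET e Hp); apply/bigcupP; exists i.
  have /eqP/cards2P [a [b [ab _]]] := e2.
  have [w wx] : exists w, w != x.
    case: (eqVneq x a) => [->|xa]; first by exists b; rewrite eq_sym.
    by exists a; rewrite eq_sym.
  move: (Hcon x w) => /connectP [[|y p] /=].
    by move=> _ wE; move: wx; rewrite wE eqxx.
  case/andP => + _; rewrite /adjE !inE => /andP [] /negP H1 H2.
  by move=> _; case: H1; rewrite H2 eqxx.
have IncE : Inc ET x = F.
  case: (eqVneq (Inc ET x) F) => // neq.
  by case: (Fmin (Inc ET x)) => //; rewrite properEneq neq IncF.
have : e \in F by move: (set11 e); rewrite -FE => /setIP [].
rewrite -IncE inE => /andP [_ xe].
have := eint x xe; case: Hp => Hph _ _; case: (Hph i) => _ H3 /H3.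
rewrite /deg; move=> H.
have : #|[set e0 in ET i | x \in e0]| <= #|F :&: ET i|.
  apply: subset_leq_card; apply/subsetP => f; rewrite !inE => /andP [fi xf].
  rewrite fi andbT -IncE inE xf andbT; by apply/bigcupP; exists i.
rewrite FE cards1 => H'.
by have := leq_trans H H'.
Qed.

Theorem lemma8 (V : finType) (k : nat) (VT : 'I_k -> {set V})
    (ET : 'I_k -> {set {set V}}) :
  is_profile VT ET ->
  gconnected (EG ET) ->
  (exists Fs : {set {set {set V}}},
      [/\ complete VT ET Fs, pairwise_parallel ET Fs &
          forall F, F \in Fs -> nice VT ET F /\ minimal_cut ET F]) <->
  (exists Fs : {set {set {set V}}},
      [/\ complete VT ET Fs, pairwise_parallel ET Fs &
          forall F, F \in Fs -> legal VT ET F /\ minimal_cut ET F]).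
Proof.
move=> Hp _; split.
  case=> Fs [C P H]; exists Fs; split=> // F /H [[]]; by [].
case=> Fs [[Ccut Ccomp] P H].
exists [set F in Fs | [forall Hc in components (EG ET :\: F),
                        comp_edges (EG ET :\: F) Hc != set0]].
split.
- split; first by move=> F; rewrite inE => /andP [/Ccut].
  move=> i e ie; case: (Ccomp i e ie) => F FFs FE; exists F => //.
  rewrite inE FFs /=; apply/forallP => Hc; apply/implyP => /imsetP [x _ ->].
  apply/negP => /eqP Hemp.
  by case: (H F FFs) => _ Fm; exact: (@key _ _ VT ET F i e x Hp Fm ie FE Hemp).
- by move=> F F'; rewrite !inE => /andP [F1 _] /andP [F2 _]; apply: P.
- move=> F; rewrite inE => /andP [FFs /forallP Hf].
  case: (H F FFs) => Hl Hm; split => //; split => // Hc Hin.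
  by have := Hf Hc; rewrite Hin.
Qed.
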